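(* Let $F\in\mathbb{C}[x]$ be a polynomial of degree $n\ge 2$ with roots $z_1,\ldots,z_n$ (listed with multiplicity). Let $k$ be an integer with $0\le k\le n$, let $K\in\mathbb{R}$ with $K\ge 1$, and let $c_1,c_2$ be real numbers satisfying \[ c_2\cdot n\cdot \ln\!\Big(\frac{1+2K}{2K}\Big)\;\ge\; c_1\cdot n\;\ge\;\frac{\max(1,k)}{\ln\!\big(1+\frac{1}{8K}\big)}. \] Let $\Delta=\Delta(m,r)$ be a disk and suppose there is a real $\lambda$ with \[ \lambda\ge\max\big(4c_2\cdot \max(1,k)\cdot n^3,\;16K\cdot\max(1,k)^2\cdot n\big) \] such that $\Delta$ is $(1,\lambda)$-isolating for the roots $z_1,\ldots,z_k$ of $F$. Then $T_k(c_1n\cdot\Delta,K,F)$ holds, i.e. \[ \left|\frac{F^{(k)}(m)(c_1nr)^k}{k!}\right|>K\sum_{i\ne k}\left|\frac{F^{(i)}(m)(c_1nr)^i}{i!}\right|. \]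
   Context: $\Delta(m,r)$ denotes the open disk in $\mathbb{C}$ with center $m$ and radius $r>0$, and $\lambda\cdot\Delta(m,r):=\Delta(m,\lambda r)$ for $\lambda>0$. For $0<\rho_1\le 1\le\rho_2$ and a set $S$ of roots of $F$ (counted with multiplicity), a disk $\Delta$ is called $(\rho_1,\rho_2)$-isolating for $S$ if $\rho_1\cdot\Delta$ contains exactly the roots in $S$ (with multiplicity) and $\rho_2\cdot\Delta\setminus\rho_1\cdot\Delta$ contains no root of $F$. For a disk $\Delta(m,r)$, $K\ge 1$ and $0\le k\le n$, the predicate $T_k(\Delta(m,r),K,F)$ (also written $T_k(m,r,K,F)$) holds iff $\left|\frac{F^{(k)}(m) r^k}{k!}\right|>K\sum_{i\neq k}\left|\frac{F^{(i)}(m)r^i}{i!}\right|$, the sum ranging over $i\in\{0,\ldots,n\}\setminus\{k\}$. *)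

(* Defs.v *)
From Stdlib Require Import Reals List Permutation.
Open Scope R_scope.

Record Cplx := mkC { re : R ; im : R }.
Definition C0 : Cplx := mkC 0 0.
Definition C1 : Cplx := mkC 1 0.
Definition Cadd (x y : Cplx) : Cplx := mkC (re x + re y) (im x + im y).
Definition Copp (x : Cplx) : Cplx := mkC (- re x) (- im x).
Definition Csub (x y : Cplx) : Cplx := Cadd x (Copp y).
Definition Cmul (x y : Cplx) : Cplx :=
  mkC (re x * re y - im x * im y) (re x * im y + im x * re y).
Definition Cscale (a : R) (x : Cplx) : Cplx := mkC (a * re x) (a * im x).
Definition Cmod (x : Cplx) : R := sqrt (re x ^ 2 + im x ^ 2).

(** Polynomials over Cplx as little-endian coefficient lists *)
Definition poly := list Cplx.
Fixpoint padd (p q : poly) : poly :=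
  match p, q with
  | nil, _ => q
  | _, nil => p
  | a :: p', b :: q' => Cadd a b :: padd p' q'
  end.
Definition pscale (a : Cplx) (p : poly) : poly := map (Cmul a) p.
Fixpoint pmul (p q : poly) : poly :=
  match p with
  | nil => nil
  | a :: p' => padd (pscale a q) (C0 :: pmul p' q)
  end.
Fixpoint peval (p : poly) (x : Cplx) : Cplx :=
  match p with
  | nil => C0
  | a :: p' => Cadd a (Cmul x (peval p' x))
  end.
(* formal derivative: coefficient i of p' is (i+1) * p_(i+1) *)
Fixpoint pderiv_aux (i : nat) (p : poly) : poly :=
  match p with
  | nil => nil
  | a :: p' => Cscale (INR i) a :: pderiv_aux (S i) p'
  end.
Definition pderiv (p : poly) : poly :=
  match p with nil => nil | _ :: p' => pderiv_aux 1 p' end.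
Fixpoint pderivn (k : nat) (p : poly) : poly :=
  match k with O => p | S k' => pderiv (pderivn k' p) end.

Definition poly_of_roots (a : Cplx) (zs : list Cplx) : poly :=
  fold_right (fun z p => pmul (Copp z :: C1 :: nil) p) (a :: nil) zs.

Definition in_disk (m : Cplx) (r : R) (z : Cplx) : Prop := Cmod (Csub z m) < r.
Definition in_diskb (m : Cplx) (r : R) (z : Cplx) : bool :=
  if Rlt_dec (Cmod (Csub z m)) r then true else false.

Definition isolating (rho1 rho2 : R) (m : Cplx) (r : R) (S zs : list Cplx) : Prop :=
  Permutation (filter (in_diskb m (rho1 * r)) zs) S /\
  (forall z, In z zs -> in_disk m (rho2 * r) z -> in_disk m (rho1 * r) z).

Definition taylor_term (F : poly) (m : Cplx) (r : R) (i : nat) : R :=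
  Cmod (Cscale (r ^ i / INR (Factorial.fact i)) (peval (pderivn i F) m)).

Definition Tk (n k : nat) (m : Cplx) (r K : R) (F : poly) : Prop :=
  taylor_term F m r k >
  K * fold_right Rplus 0
        (map (fun i => if Nat.eqb i k then 0 else taylor_term F m r i)
             (seq 0 (S n))).

(* Main.v *)
Require Import Defs.
From Stdlib Require Import Reals List Permutation Lra Lia Psatz.
Open Scope R_scope.

Lemma Cext (x y : Cplx) : re x = re y -> im x = im y -> x = y.
Proof. destruct x, y; simpl; intros; subst; reflexivity. Qed.

Ltac ceq := apply Cext; simpl; try ring.

Lemma Cmod_ge0 x : 0 <= Cmod x.
Proof. unfold Cmod; apply sqrt_pos. Qed.

Lemma sq_le_sqrt A B : 0 <= B -> A <= B * B -> sqrt A <= B.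
Proof.
  intros HB HA. rewrite <- (sqrt_square B HB). apply sqrt_le_1_alt; lra.
Qed.

Lemma Cmod_sq x : Cmod x * Cmod x = re x ^ 2 + im x ^ 2.
Proof. unfold Cmod. rewrite sqrt_sqrt; nra. Qed.

Lemma Cmod_mul x y : Cmod (Cmul x y) = Cmod x * Cmod y.
Proof.
  unfold Cmod, Cmul; simpl. rewrite <- sqrt_mult_alt by nra.
  f_equal. ring.
Qed.

Lemma Cmod_scale c x : Cmod (Cscale c x) = Rabs c * Cmod x.
Proof.
  unfold Cmod, Cscale; simpl. rewrite <- sqrt_Rsqr_abs. unfold Rsqr.
  rewrite <- sqrt_mult_alt by nra. f_equal; ring.
Qed.

Lemma Cmod_opp x : Cmod (Copp x) = Cmod x.
Proof. unfold Cmod, Copp; simpl. f_equal; ring. Qed.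

Lemma Cmod_add x y : Cmod (Cadd x y) <= Cmod x + Cmod y.
Proof.
  pose proof (Cmod_ge0 x); pose proof (Cmod_ge0 y).
  pose proof (Cmod_sq x); pose proof (Cmod_sq y).
  unfold Cmod at 1. apply sq_le_sqrt. lra.
  destruct x as [a b], y as [c d]; simpl in *.
  assert (HCS: (a*c+b*d)^2 <= (Cmod (mkC a b) * Cmod (mkC c d))^2).
  { replace ((Cmod (mkC a b) * Cmod (mkC c d))^2) with
      ((Cmod (mkC a b) * Cmod (mkC a b)) * (Cmod (mkC c d) * Cmod (mkC c d))) by ring.
    rewrite H1, H2. assert (0 <= (a*d-b*c)^2) by apply pow2_ge_0. lra. }
  assert (a*c+b*d <= Cmod (mkC a b) * Cmod (mkC c d)).
  { apply Rsqr_incr_0_var; [unfold Rsqr; simpl in HCS; lra | apply Rmult_le_pos; auto]. }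
  nra.
Qed.

Lemma Cmod_sub_opp z m : Cmod (Csub m z) = Cmod (Csub z m).
Proof. rewrite <- Cmod_opp. f_equal. unfold Csub, Copp, Cadd. ceq. Qed.

Lemma Cmod_C0 : Cmod C0 = 0.
Proof. unfold Cmod. replace (re C0 ^ 2 + im C0 ^ 2) with 0 by (simpl; ring). apply sqrt_0. Qed.

Lemma Cmod_pos x : x <> C0 -> 0 < Cmod x.
Proof.
  intros H. destruct (Cmod_ge0 x) as [|H0]; auto. exfalso.
  pose proof (Cmod_sq x). rewrite <- H0 in H1. apply H.
  destruct x as [a b]; simpl in *. unfold C0. apply Cext; simpl; nra.
Qed.

Definition coef (p : Defs.poly) (j : nat) : Cplx := nth j p C0.
Definition Lin (c : Cplx) : Defs.poly := c :: Defs.C1 :: nil.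

Lemma coef_cons0 a p : coef (a :: p) 0 = a.
Proof. reflexivity. Qed.
Lemma coef_consS a p j : coef (a :: p) (S j) = coef p j.
Proof. reflexivity. Qed.
Lemma coef_nil j : coef nil j = C0.
Proof. unfold coef; destruct j; reflexivity. Qed.

Lemma coef_padd p q j : coef (padd p q) j = Cadd (coef p j) (coef q j).
Proof.
  revert q j; induction p as [|a p IH]; intros q j.
  - simpl. rewrite coef_nil. ceq.
  - destruct q as [|b q].
    + simpl. rewrite coef_nil. ceq.
    + destruct j; simpl.
      * rewrite !coef_cons0. reflexivity.
      * rewrite !coef_consS. apply IH.
Qed.

Lemma coef_pscale a p j : coef (pscale a p) j = Cmul a (coef p j).
Proof.
  revert j; induction p as [|b p IH]; intros j; unfold coef in *; simpl.
  - destruct j; ceq.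
  - destruct j; simpl; auto.
Qed.


Lemma coef_pderiv_aux i p j :
  coef (pderiv_aux i p) j = Cscale (INR (i + j)) (coef p j).
Proof.
  revert i j; induction p as [|a p IH]; intros i j.
  - rewrite !coef_nil. ceq.
  - simpl. destruct j.
    + rewrite !coef_cons0, Nat.add_0_r. reflexivity.
    + rewrite !coef_consS, IH. f_equal. f_equal. lia.
Qed.

Lemma coef_pderiv p j : coef (pderiv p) j = Cscale (INR (S j)) (coef p (S j)).
Proof.
  destruct p as [|a p]; simpl.
  - rewrite !coef_nil. ceq.
  - rewrite coef_pderiv_aux, coef_consS. reflexivity.
Qed.

Lemma coef_lin0 c H : coef (pmul (Lin c) H) 0 = Cmul c (coef H 0).
Proof.
  change (pmul (Lin c) H) with (padd (pscale c H) (C0 :: padd (pscale Defs.C1 H) (C0 :: nil))).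
  rewrite coef_padd, coef_pscale, coef_cons0. ceq.
Qed.

Lemma coef_linS c H j :
  coef (pmul (Lin c) H) (S j) = Cadd (Cmul c (coef H (S j))) (coef H j).
Proof.
  change (pmul (Lin c) H) with (padd (pscale c H) (C0 :: padd (pscale Defs.C1 H) (C0 :: nil))).
  rewrite coef_padd, coef_pscale, coef_consS, coef_padd, coef_pscale.
  replace (coef (C0 :: nil) j) with C0 by (destruct j; [reflexivity| rewrite coef_consS, coef_nil; reflexivity]).
  ceq.
Qed.

Lemma peval_zero q x : (forall j, coef q j = C0) -> peval q x = C0.
Proof.
  induction q as [|b q IH]; intros H; simpl; auto.
  rewrite IH. rewrite <- (coef_cons0 b q), H. ceq.
  intros j. rewrite <- (coef_consS b q j). apply H.
Qed.

Lemma peval_equiv p q x : (forall j, coef p j = coef q j) -> peval p x = peval q x.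
Proof.
  revert q; induction p as [|a p IH]; intros q H.
  - simpl. symmetry. apply peval_zero. intros j. rewrite <- H. apply coef_nil.
  - destruct q as [|b q].
    + rewrite (peval_zero (a :: p)); auto. intros j; rewrite H; apply coef_nil.
    + simpl. rewrite (IH q).
      * pose proof (H 0%nat) as H0. rewrite !coef_cons0 in H0. rewrite H0. reflexivity.
      * intros j. pose proof (H (S j)) as H1. rewrite !coef_consS in H1. exact H1.
Qed.

Lemma peval_padd p q x : peval (padd p q) x = Cadd (peval p x) (peval q x).
Proof.
  revert q; induction p as [|a p IH]; intros q; destruct q as [|b q]; simpl; try (rewrite IH); ceq.
Qed.

Lemma peval_pscale a p x : peval (pscale a p) x = Cmul a (peval p x).
Proof.
  induction p as [|b p IH]. simpl; ceq.
  change (peval (Cmul a b :: pscale a p) x = Cmul a (peval (b :: p) x)).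
  simpl peval. rewrite IH. ceq.
Qed.

Lemma peval_lin c H x : peval (pmul (Lin c) H) x = Cmul (Cadd c x) (peval H x).
Proof.
  change (pmul (Lin c) H) with (padd (pscale c H) (C0 :: padd (pscale Defs.C1 H) (C0 :: nil))).
  rewrite peval_padd, peval_pscale. simpl peval at 2.
  rewrite peval_padd, peval_pscale. simpl. ceq.
Qed.

Lemma coef_deriv_lin c G i j :
  coef (pderivn i (pmul (Lin c) G)) j =
  Cadd (Cscale (INR i) (coef (pderivn (pred i) G) j))
       (coef (pmul (Lin c) (pderivn i G)) j).
Proof.
  revert j; induction i as [|i IH]; intros j.
  - simpl. ceq.
  - change (pderivn (S i) (pmul (Lin c) G)) with (pderiv (pderivn i (pmul (Lin c) G))).
    rewrite coef_pderiv, IH, coef_linS.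
    change (pderivn (S i) G) with (pderiv (pderivn i G)).
    change (pred (S i)) with i.
    assert (E: forall j', coef (pderiv (pderivn i G)) j' = Cscale (INR (S j')) (coef (pderivn i G) (S j'))) by (intros; apply coef_pderiv).
    destruct j as [|j].
    + rewrite coef_lin0, E.
      destruct i as [|i].
      * simpl. ceq.
      * change (pred (S i)) with i.
        replace (coef (pderivn (S i) G) 0) with (Cscale (INR 1) (coef (pderivn i G) 1))
          by (symmetry; apply coef_pderiv).
        apply Cext; simpl; rewrite ?S_INR; simpl; ring.
    + rewrite coef_linS, !E.
      destruct i as [|i].
      * simpl. apply Cext; simpl; rewrite ?S_INR; simpl; ring.
      * change (pred (S i)) with i.
        replace (coef (pderivn (S i) G) (S j)) with (Cscale (INR (S (S j))) (coef (pderivn i G) (S (S j))))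
          by (symmetry; apply coef_pderiv).
        apply Cext; simpl; rewrite ?S_INR; simpl; ring.
Qed.

Lemma t_lin c G i x :
  peval (pderivn i (pmul (Lin c) G)) x =
  Cadd (Cscale (INR i) (peval (pderivn (pred i) G) x))
       (Cmul (Cadd c x) (peval (pderivn i G) x)).
Proof.
  rewrite (peval_equiv _ (padd (pscale (mkC (INR i) 0) (pderivn (pred i) G))
                              (pmul (Lin c) (pderivn i G)))).
  - rewrite peval_padd, peval_pscale, peval_lin. ceq.
  - intros j. rewrite coef_deriv_lin, coef_padd, coef_pscale. f_equal. ceq.
Qed.

Definition u (a m : Cplx) (rho : R) (zs : list Cplx) (i : nat) : Cplx :=
  Cscale (rho ^ i / INR (Factorial.fact i)) (peval (pderivn i (poly_of_roots a zs)) m).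

Definition step (rho : R) (w : Cplx) (s : nat -> Cplx) (i : nat) : Cplx :=
  match i with
  | O => Cmul w (s O)
  | S i' => Cadd (Cmul w (s i)) (Cscale rho (s i'))
  end.

Lemma u_cons a m rho z zs i :
  u a m rho (z :: zs) i = step rho (Csub m z) (u a m rho zs) i.
Proof.
  unfold u. change (poly_of_roots a (z :: zs)) with (pmul (Lin (Copp z)) (poly_of_roots a zs)).
  rewrite t_lin. destruct i as [|i].
  - simpl. apply Cext; simpl; field.
  - unfold step. change (pred (S i)) with i.
    replace (INR (Factorial.fact (S i))) with (INR (S i) * INR (Factorial.fact i))
      by (rewrite <- mult_INR; reflexivity).
    pose proof (INR_fact_neq_0 i). assert (INR (S i) <> 0) by (apply not_0_INR; lia).
    set (f1 := INR (Factorial.fact i)) in *. set (si := INR (S i)) in *.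
    change (rho ^ S i) with (rho * rho ^ i).
    set (X := peval (pderivn i (poly_of_roots a zs)) m).
    set (Y := peval (pderivn (S i) (poly_of_roots a zs)) m).
    apply Cext; simpl; field; auto.
Qed.

Lemma pderivn_nil i : pderivn i nil = nil.
Proof. induction i; simpl; auto. rewrite IHi. reflexivity. Qed.

Lemma pderivn_const i a : pderivn (S i) (a :: nil) = nil.
Proof. induction i; simpl; auto. simpl in IHi. rewrite IHi. reflexivity. Qed.

Lemma u_nil0 a m rho : u a m rho nil 0 = a.
Proof. unfold u. simpl. apply Cext; simpl; field. Qed.

Lemma u_nilS a m rho i : u a m rho nil (S i) = C0.
Proof. unfold u. simpl poly_of_roots. rewrite pderivn_const. simpl. ceq. Qed.

Fixpoint sumR (f : nat -> R) (c : nat) : R :=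
  match c with O => 0 | S c' => sumR f c' + f c' end.

Lemma sumR_ext f g c : (forall i, (i < c)%nat -> f i = g i) -> sumR f c = sumR g c.
Proof. induction c; simpl; intros H; auto. rewrite IHc, H; auto. Qed.

Lemma sumR_le f g c : (forall i, (i < c)%nat -> f i <= g i) -> sumR f c <= sumR g c.
Proof. induction c; simpl; intros H. lra. apply Rplus_le_compat; auto. Qed.

Lemma sumR_nonneg f c : (forall i, 0 <= f i) -> 0 <= sumR f c.
Proof. intros H; induction c; simpl. lra. specialize (H c). lra. Qed.

Lemma sumR_shift f c : sumR f (S c) = f 0%nat + sumR (fun i => f (S i)) c.
Proof. induction c; simpl in *. ring. rewrite IHc. ring. Qed.

Lemma sumR_mono f c : (forall i, 0 <= f i) -> sumR f c <= sumR f (S c).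
Proof. intros H; simpl. specialize (H c). lra. Qed.

Lemma sumR_lin a b f g c :
  sumR (fun i => a * f i + b * g i) c = a * sumR f c + b * sumR g c.
Proof. induction c; simpl. ring. rewrite IHc. ring. Qed.

Lemma sumR_split f a b : sumR f (a + b) = sumR f a + sumR (fun i => f (a + i)%nat) b.
Proof. induction b; simpl. rewrite Nat.add_0_r. ring. rewrite Nat.add_succ_r. simpl. rewrite IHb. ring. Qed.

Lemma sumR_zero c : sumR (fun _ => 0) c = 0.
Proof. induction c; simpl; auto. rewrite IHc; ring. Qed.

Lemma step_S_bound rho w s i : 0 <= rho ->
  Cmod (step rho w s (S i)) <= Cmod w * Cmod (s (S i)) + rho * Cmod (s i).
Proof.
  intros Hr. simpl step. eapply Rle_trans. apply Cmod_add.
  rewrite Cmod_mul, Cmod_scale, Rabs_pos_eq by auto. lra.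
Qed.

Lemma step_0 rho w s : Cmod (step rho w s 0) = Cmod w * Cmod (s 0%nat).
Proof. simpl. apply Cmod_mul. Qed.

Lemma tail_step rho w s o c : 0 <= rho ->
  sumR (fun i => Cmod (step rho w s (S (o + i)))) c <=
  Cmod w * sumR (fun i => Cmod (s (S (o + i)))) c + rho * sumR (fun i => Cmod (s (o + i)%nat)) c.
Proof.
  intros Hr. rewrite <- sumR_lin. apply sumR_le. intros i _. apply step_S_bound; auto.
Qed.

Lemma low_step rho w s c : 0 <= rho ->
  sumR (fun i => Cmod (step rho w s i)) (S c) <=
  Cmod w * sumR (fun i => Cmod (s i)) (S c) + rho * sumR (fun i => Cmod (s i)) c.
Proof.
  intros Hr. induction c.
  - simpl. rewrite Cmod_mul. lra.
  - change (sumR (fun i => Cmod (step rho w s i)) (S (S c))) with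
      (sumR (fun i => Cmod (step rho w s i)) (S c) + Cmod (step rho w s (S c))).
    pose proof (step_S_bound rho w s c Hr).
    change (sumR (fun i => Cmod (s i)) (S (S c))) with
      (sumR (fun i => Cmod (s i)) (S c) + Cmod (s (S c))).
    change (sumR (fun i => Cmod (s i)) (S c)) with
      (sumR (fun i => Cmod (s i)) c + Cmod (s c)) at 2.
    lra.
Qed.

Lemma outer a m rho R0 B : 0 < rho -> 0 < R0 -> a <> C0 ->
  (forall z, In z B -> R0 <= Cmod (Csub m z)) ->
  0 < Cmod (u a m rho B 0) /\
  forall c, sumR (fun i => Cmod (u a m rho B (S i))) c <=
            ((1 + rho / R0) ^ (length B) - 1) * Cmod (u a m rho B 0).
Proof.
  intros Hr HR Ha. induction B as [|z B IH]; intros HB.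
  - rewrite u_nil0. split. apply Cmod_pos; auto.
    intros c. rewrite (sumR_ext _ (fun _ => 0)). rewrite sumR_zero. simpl. lra.
    intros i _. rewrite u_nilS. apply Cmod_C0.
  - destruct IH as [Hpos Hsum]. intros; apply HB; simpl; auto.
    assert (Hw : R0 <= Cmod (Csub m z)) by (apply HB; simpl; auto).
    set (s := u a m rho B) in *. set (w := Csub m z) in *.
    set (q := rho / R0).
    assert (Hq : rho <= q * Cmod w).
    { unfold q. replace rho with (rho / R0 * R0) at 1 by (field; lra).
      apply Rmult_le_compat_l; auto. apply Rlt_le, Rdiv_lt_0_compat; auto. }
    assert (Hq0 : 0 <= q) by (apply Rlt_le, Rdiv_lt_0_compat; auto).
    rewrite u_cons, step_0. fold s. fold w. split.
    + apply Rmult_lt_0_compat; lra.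
    + intros c. rewrite (sumR_ext _ (fun i => Cmod (step rho w s (S i)))).
      2:{ intros i _. rewrite u_cons. reflexivity. }
      eapply Rle_trans. apply (tail_step rho w s 0 c); lra. simpl (0 + _)%nat.
      pose proof (Hsum c) as H1. fold q in H1.
      assert (H2 : sumR (fun i => Cmod (s i)) c <= Cmod (s 0%nat) + sumR (fun i => Cmod (s (S i))) c).
      { replace (Cmod (s 0%nat) + sumR (fun i => Cmod (s (S i))) c) with (sumR (fun i => Cmod (s i)) (S c)) by (rewrite sumR_shift; reflexivity).
        apply sumR_mono. intros; apply Cmod_ge0. }
      set (T := (1 + q) ^ length B) in *.
      assert (HT : 1 <= T). { unfold T. apply pow_R1_Rle. lra. }
      change (length (z :: B)) with (S (length B)). simpl pow. fold T.
      pose proof (Cmod_ge0 w). pose proof (Cmod_ge0 (s 0%nat)).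
      assert (rho * (T * Cmod (s 0%nat)) <= q * Cmod w * (T * Cmod (s 0%nat))).
      { apply Rmult_le_compat_r; auto. apply Rmult_le_pos; lra. }
      assert (Cmod w * sumR (fun i => Cmod (s (S i))) c <= Cmod w * ((T - 1) * Cmod (s 0%nat))).
      { apply Rmult_le_compat_l; auto. }
      assert (rho * sumR (fun i => Cmod (s i)) c <= rho * (T * Cmod (s 0%nat))).
      { apply Rmult_le_compat_l; lra. }
      nra.
Qed.

Lemma inner a m rho p eps B : 0 < rho -> 0 <= p -> 0 <= eps ->
  (forall c, sumR (fun i => Cmod (u a m rho B (S i))) c <= eps * Cmod (u a m rho B 0)) ->
  forall A, (forall z, In z A -> Cmod (Csub m z) <= p * rho) ->
  Cmod (Csub (u a m rho (A ++ B) (length A)) (Cscale (rho ^ length A) (u a m rho B 0)))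
    <= eps * ((1 + p) ^ length A - 1) * (rho ^ length A * Cmod (u a m rho B 0)) /\
  sumR (fun i => Cmod (u a m rho (A ++ B) i)) (length A)
    <= ((1 + p) ^ length A - 1) * (1 + eps * (1 + p) ^ length A) * (rho ^ length A * Cmod (u a m rho B 0)) /\
  (forall c, sumR (fun i => Cmod (u a m rho (A ++ B) (S (length A + i)))) c
    <= eps * (1 + p) ^ length A * (rho ^ length A * Cmod (u a m rho B 0))).
Proof.
  intros Hr Hp He HB. induction A as [|z A IH]; intros HA.
  - simpl. split; [|split].
    + replace (Csub (u a m rho B 0) (Cscale 1 (u a m rho B 0))) with C0 by ceq.
      rewrite Cmod_C0. lra.
    + lra.
    + intros c. rewrite Rmult_1_r, Rmult_1_l. apply HB.
  - destruct IH as [Hd [Hl Ht]]. intros; apply HA; simpl; auto.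
    assert (Hw : Cmod (Csub m z) <= p * rho) by (apply HA; simpl; auto).
    set (s := u a m rho (A ++ B)) in *. set (w := Csub m z) in *.
    set (j := length A) in *.
    set (M := Cscale (rho ^ j) (u a m rho B 0)) in *.
    set (mM := rho ^ j * Cmod (u a m rho B 0)) in *.
    set (P := (1 + p) ^ j) in *.
    assert (HP : 1 <= P) by (unfold P; apply pow_R1_Rle; lra).
    assert (HmM : 0 <= mM) by (unfold mM; apply Rmult_le_pos; [apply pow_le; lra | apply Cmod_ge0]).
    assert (HMm : Cmod M = mM).
    { unfold M, mM. rewrite Cmod_scale, Rabs_pos_eq; auto. apply pow_le; lra. }
    assert (Es : forall i, u a m rho ((z :: A) ++ B) i = step rho w s i).
    { intros i. change ((z :: A) ++ B) with (z :: (A ++ B)). apply u_cons. }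
    change (length (z :: A)) with (S j).
    replace (rho ^ S j * Cmod (u a m rho B 0)) with (rho * mM) by (unfold mM; simpl; ring).
    change ((1 + p) ^ S j) with ((1 + p) * (1 + p) ^ j). fold P.
    pose proof (Cmod_ge0 w).
    assert (Hsj : Cmod (s (S j)) <= eps * P * mM).
    { pose proof (Ht 1%nat) as H1. simpl in H1. rewrite Nat.add_0_r in H1. lra. }
    assert (Hsj0 : Cmod (s j) <= (1 + eps * (P - 1)) * mM).
    { replace (s j) with (Cadd (Csub (s j) M) M) by (unfold Csub; ceq).
      eapply Rle_trans. apply Cmod_add. lra. }
    split; [|split].
    + rewrite Es. unfold step.
      replace (Csub (Cadd (Cmul w (s (S j))) (Cscale rho (s j))) (Cscale (rho ^ S j) (u a m rho B 0)))
        with (Cadd (Cmul w (s (S j))) (Cscale rho (Csub (s j) M)))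
        by (unfold M; change (rho ^ S j) with (rho * rho ^ j); ceq).
      eapply Rle_trans. apply Cmod_add.
      rewrite Cmod_mul, Cmod_scale, Rabs_pos_eq by lra.
      assert (Cmod w * Cmod (s (S j)) <= p * rho * (eps * P * mM)).
      { apply Rmult_le_compat; auto. apply Cmod_ge0. }
      assert (rho * Cmod (Csub (s j) M) <= rho * (eps * (P - 1) * mM)).
      { apply Rmult_le_compat_l; lra. }
      nra.
    + rewrite (sumR_ext _ (fun i => Cmod (step rho w s i))) by (intros; rewrite Es; auto).
      eapply Rle_trans. apply low_step; lra.
      change (sumR (fun i => Cmod (s i)) (S j)) with (sumR (fun i => Cmod (s i)) j + Cmod (s j)).
      set (L := sumR (fun i => Cmod (s i)) j) in *.
      assert (0 <= L) by (apply sumR_nonneg; intros; apply Cmod_ge0).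
      assert (Cmod w * (L + Cmod (s j)) <= p * rho * ((P - 1) * (1 + eps * P) * mM + (1 + eps * (P - 1)) * mM)).
      { apply Rmult_le_compat; auto. apply Rplus_le_le_0_compat; auto; apply Cmod_ge0. lra. }
      assert (rho * L <= rho * ((P - 1) * (1 + eps * P) * mM)) by (apply Rmult_le_compat_l; lra).
      assert (Hid : 0 <= eps * p * P * (P + p * P - 1) + eps * p).
      { assert (0 <= P + p * P - 1) by nra.
        assert (0 <= eps * p) by nra. assert (0 <= eps * p * P) by nra. nra. }
      assert (0 <= rho * mM) by nra.
      assert (0 <= (eps * p * P * (P + p * P - 1) + eps * p) * (rho * mM)) by nra.
      nra.
    + intros c.
      rewrite (sumR_ext _ (fun i => Cmod (step rho w s (S (S j + i))))) by (intros; rewrite Es; auto).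
      eapply Rle_trans. apply tail_step; lra.
      assert (sumR (fun i => Cmod (s (S (S j + i)))) c <= eps * P * mM).
      { eapply Rle_trans. 2: apply (Ht (S c)).
        rewrite sumR_shift. rewrite Nat.add_0_r.
        rewrite (sumR_ext (fun i => Cmod (s (S (j + S i)))) (fun i => Cmod (s (S (S j + i))))).
        2:{ intros i _. rewrite Nat.add_succ_r. reflexivity. }
        pose proof (Cmod_ge0 (s (S j))). lra. }
      pose proof (Ht c) as Htc.
      change (sumR (fun i => Cmod (s (S j + i)%nat)) c) with (sumR (fun i => Cmod (s (S (j + i)))) c).
      assert (Cmod w * sumR (fun i => Cmod (s (S (S j + i)))) c <= p * rho * (eps * P * mM)).
      { apply Rmult_le_compat; auto. apply sumR_nonneg; intros; apply Cmod_ge0. }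
      assert (rho * sumR (fun i => Cmod (s (S (j + i)))) c <= rho * (eps * P * mM)).
      { apply Rmult_le_compat_l; lra. }
      nra.
Qed.

Lemma fold_sum f s c :
  fold_right Rplus 0 (map f (seq s c)) = sumR (fun i => f (s + i)%nat) c.
Proof.
  revert s; induction c; intros s. reflexivity.
  change (seq s (S c)) with (s :: seq (S s) c). cbn [map fold_right].
  rewrite IHc. rewrite (sumR_shift (fun i => f (s + i)%nat)). rewrite Nat.add_0_r.
  rewrite (sumR_ext (fun i => f (S s + i)%nat) (fun i => f (s + S i)%nat)).
  2:{ intros; f_equal; lia. }
  reflexivity.
Qed.

Lemma exp_le x y : x <= y -> exp x <= exp y.
Proof. intros [H|H]. apply Rlt_le, exp_increasing; auto. subst; lra. Qed.

Lemma pow_exp p k : 0 <= p -> (1 + p) ^ k <= exp (INR k * p).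
Proof.
  intros Hp. induction k.
  - simpl. rewrite Rmult_0_l, exp_0. lra.
  - rewrite S_INR. replace ((INR k + 1) * p) with (INR k * p + p) by ring.
    rewrite exp_plus. simpl. rewrite Rmult_comm.
    apply Rmult_le_compat; try lra. apply pow_le; lra. apply exp_ineq1_le.
Qed.

Lemma pow_lin q N : 0 <= q -> INR N * q <= 1/2 -> (1 + q) ^ N <= 1 + 2 * INR N * q.
Proof.
  intros Hq. induction N; intros H.
  - simpl. lra.
  - rewrite S_INR in *. simpl.
    assert (INR N * q <= 1/2). { pose proof (pos_INR N). nra. }
    specialize (IHN H0). pose proof (pos_INR N).
    apply Rle_trans with ((1 + q) * (1 + 2 * INR N * q)).
    apply Rmult_le_compat_l; lra. nra.
Qed.

Lemma filter_all {T} (f : T -> bool) l : (forall x, In x l -> f x = true) -> filter f l = l.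
Proof.
  induction l; simpl; intros H; auto. rewrite H by auto. rewrite IHl; auto.
Qed.

Lemma final_num K d e : 1 <= K -> 0 <= d -> 0 <= e -> K * d <= 1/8 -> K * e <= 1/8 ->
  K * (d * (1 + e * (1 + d)) + e * (1 + d)) < 1 - e * d.
Proof.
  intros HK Hd He Hkd Hke.
  assert (d <= 1/8) by nra. assert (e <= 1/8) by nra.
  assert (e * d <= 1/64) by nra.
  assert (K * d * (e * (1 + d)) <= 1/8 * (e * (1 + d))).
  { apply Rmult_le_compat_r; nra. }
  assert (K * e * (1 + d) <= 1/8 * (1 + d)) by (apply Rmult_le_compat_r; nra).
  nra.
Qed.

Theorem theorem3p2 (n k : nat) (a : Cplx) (zs : list Cplx) (K c1 c2 lam : R)
  (m : Cplx) (r : R) :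
  (2 <= n)%nat ->
  a <> C0 ->
  length zs = n ->
  (k <= n)%nat ->
  1 <= K ->
  c2 * INR n * ln ((1 + 2 * K) / (2 * K)) >= c1 * INR n ->
  c1 * INR n >= INR (Nat.max 1 k) / ln (1 + 1 / (8 * K)) ->
  0 < r ->
  lam >= Rmax (4 * c2 * INR (Nat.max 1 k) * INR n ^ 3)
              (16 * K * INR (Nat.max 1 k) ^ 2 * INR n) ->
  isolating 1 lam m r (firstn k zs) zs ->
  Tk n k m (c1 * INR n * r) K (poly_of_roots a zs).
Proof.
  intros Hn Ha Hlen Hk HK Hc2 Hc1 Hr Hlam [Hperm Hiso].
  set (X := c1 * INR n) in *.
  set (Mx := INR (Nat.max 1 k)) in *.
  assert (HM1 : 1 <= Mx) by (unfold Mx; apply (le_INR 1); lia).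
  assert (HMk : INR k <= Mx) by (unfold Mx; apply le_INR; lia).
  assert (Hn2 : 2 <= INR n) by (apply (le_INR 2); lia).
  set (l8 := ln (1 + 1 / (8 * K))) in *.
  assert (Hl8 : 0 < l8).
  { unfold l8. rewrite <- ln_1. apply ln_increasing. lra.
    assert (0 < 1 / (8 * K)) by (apply Rdiv_lt_0_compat; lra). lra. }
  assert (HXl : Mx <= X * l8).
  { apply Rge_le in Hc1. apply Rmult_le_compat_r with (r := l8) in Hc1; [|lra].
    unfold Rdiv in Hc1. rewrite Rmult_assoc, Rinv_l, Rmult_1_r in Hc1; lra. }
  assert (HX : 0 < X) by nra.
  set (l2 := ln ((1 + 2 * K) / (2 * K))) in *.
  assert (Hl2 : 0 < l2 < 1 / (2 * K)).
  { unfold l2. replace ((1 + 2 * K) / (2 * K)) with (1 + 1 / (2 * K)) by (field; lra).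
    assert (0 < 1 / (2 * K)) by (apply Rdiv_lt_0_compat; lra).
    split.
    - rewrite <- ln_1. apply ln_increasing; lra.
    - rewrite <- (ln_exp (1 / (2 * K))) at 2. apply ln_increasing. lra.
      apply exp_ineq1. lra. }
  set (c2n := c2 * INR n) in *.
  assert (Hc2n : 0 < c2n) by nra.
  assert (HXc : 2 * K * X <= c2n).
  { assert (X <= c2n * l2) by lra.
    assert (c2n * l2 <= c2n * (1 / (2 * K))) by (apply Rmult_le_compat_l; lra).
    assert (c2n * (1 / (2 * K)) * (2 * K) = c2n) by (field; lra). nra. }
  assert (Hlam1 : 4 * c2 * Mx * INR n ^ 3 <= lam) by (pose proof (Rmax_l (4 * c2 * Mx * INR n ^ 3) (16 * K * Mx ^ 2 * INR n)); lra).
  assert (Hlam2 : 16 * K * Mx ^ 2 * INR n <= lam) by (pose proof (Rmax_r (4 * c2 * Mx * INR n ^ 3) (16 * K * Mx ^ 2 * INR n)); lra).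
  assert (Hlam0 : 0 < lam).
  { assert (0 < 16 * K * Mx ^ 2 * INR n). { assert (0 < Mx ^ 2) by (apply pow_lt; lra).
      repeat apply Rmult_lt_0_compat; lra. } lra. }
  assert (H8 : 8 * K * INR n ^ 2 * X <= lam).
  { assert (4 * c2n * INR n ^ 2 <= 4 * c2 * Mx * INR n ^ 3).
    { assert (0 <= c2) by (unfold c2n in Hc2n; nra). unfold c2n.
      replace (4 * c2 * Mx * INR n ^ 3) with (Mx * (4 * c2 * INR n * INR n ^ 2)) by ring.
      assert (0 <= 4 * c2 * INR n * INR n ^ 2) by (assert (0 <= INR n ^ 2) by (apply pow_le; lra); repeat apply Rmult_le_pos; lra).
      nra. }
    assert (0 <= INR n ^ 2) by (apply pow_le; lra).
    assert (8 * K * INR n ^ 2 * X = 4 * INR n ^ 2 * (2 * K * X)) by ring.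
    assert (4 * INR n ^ 2 * (2 * K * X) <= 4 * INR n ^ 2 * c2n) by (apply Rmult_le_compat_l; lra).
    lra. }
  set (rho := X * r).
  assert (Hrho : 0 < rho) by (unfold rho; nra).
  set (q := rho / (lam * r)).
  assert (Hq : q * lam = X) by (unfold q, rho; field; lra).
  assert (Hq0 : 0 <= q) by (unfold q; apply Rlt_le, Rdiv_lt_0_compat; nra).
  assert (Hq8 : 8 * K * INR n ^ 2 * q <= 1).
  { assert (8 * K * INR n ^ 2 * q * lam <= 1 * lam) by nra.
    apply Rmult_le_reg_r with lam; lra. }
  set (p := 1 / X).
  assert (Hp0 : 0 <= p) by (unfold p; apply Rlt_le, Rdiv_lt_0_compat; lra).
  assert (Hprho : p * rho = r) by (unfold p, rho; field; lra).
  set (f := in_diskb m (1 * r)) in *.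
  set (A := firstn k zs) in *. set (B := skipn k zs).
  assert (HAB : A ++ B = zs) by apply firstn_skipn.
  assert (HlenA : length A = k) by (unfold A; rewrite length_firstn; lia).
  assert (HlenB : length B = (n - k)%nat) by (unfold B; rewrite length_skipn; lia).
  assert (HinA : forall z, In z A -> Cmod (Csub m z) <= p * rho).
  { intros z Hz. apply (Permutation_in z (Permutation_sym Hperm)) in Hz.
    apply filter_In in Hz. destruct Hz as [_ Hz]. unfold f, in_diskb in Hz.
    destruct (Rlt_dec (Cmod (Csub z m)) (1 * r)) as [H|H]; [|discriminate].
    rewrite Cmod_sub_opp. lra. }
  assert (HfB : filter f B = nil).
  { apply length_zero_iff_nil. pose proof (Permutation_length Hperm) as HL.
    rewrite <- HAB, filter_app, length_app in HL.
    rewrite filter_all in HL. lia.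
    intros z Hz. apply (Permutation_in z (Permutation_sym Hperm)) in Hz.
    apply filter_In in Hz. tauto. }
  assert (HinB : forall z, In z B -> lam * r <= Cmod (Csub m z)).
  { intros z Hz. rewrite Cmod_sub_opp. destruct (Rle_dec (lam * r) (Cmod (Csub z m))) as [H|H]; auto.
    exfalso. assert (Hd : in_disk m (1 * r) z).
    { apply Hiso. rewrite <- HAB. apply in_or_app; auto. unfold in_disk. lra. }
    assert (In z (filter f B)).
    { apply filter_In. split; auto. unfold f, in_diskb. unfold in_disk in Hd.
      destruct (Rlt_dec (Cmod (Csub z m)) (1 * r)); auto. }
    rewrite HfB in H0. inversion H0. }
  destruct (outer a m rho (lam * r) B Hrho ltac:(nra) Ha HinB) as [Hu0 Hout].
  fold q in Hout. rewrite HlenB in Hout.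
  set (eps := (1 + q) ^ (n - k) - 1) in *.
  assert (Heps0 : 0 <= eps) by (unfold eps; assert (1 <= (1 + q) ^ (n - k)) by (apply pow_R1_Rle; lra); lra).
  assert (HnkI : INR (n - k) <= INR n) by (apply le_INR; lia).
  assert (Hnq : INR n * q <= 1/16).
  { assert (0 <= INR n * q) by (apply Rmult_le_pos; lra).
    assert (16 <= 8 * K * INR n) by nra.
    assert ((8 * K * INR n) * (INR n * q) = 8 * K * INR n ^ 2 * q) by ring.
    assert (16 * (INR n * q) <= (8 * K * INR n) * (INR n * q)) by (apply Rmult_le_compat_r; lra).
    lra. }
  assert (HKe : K * eps <= 1/8).
  { assert (Hb : (1 + q) ^ (n - k) <= 1 + 2 * INR (n - k) * q).
    { apply pow_lin; auto. assert (INR (n - k) * q <= INR n * q) by (apply Rmult_le_compat_r; lra). lra. }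
    assert (eps <= 2 * INR n * q) by (unfold eps; nra).
    assert (K * eps <= 2 * K * INR n * q) by nra.
    assert (4 * INR n * (2 * K * INR n * q) <= 1) by nra. nra. }
  destruct (inner a m rho p eps B Hrho Hp0 Heps0 Hout A HinA) as [Hd [Hl Ht]].
  rewrite HlenA in Hd, Hl, Ht. rewrite HAB in Hd, Hl, Ht.
  set (P := (1 + p) ^ k) in *.
  assert (HP1 : 1 <= P) by (unfold P; apply pow_R1_Rle; lra).
  assert (HP : K * (P - 1) <= 1/8).
  { assert (P <= 1 + 1 / (8 * K)).
    { apply Rle_trans with (exp (INR k * p)). apply pow_exp; auto.
      fold l8. rewrite <- (exp_ln (1 + 1 / (8 * K))).
      2:{ assert (0 < 1 / (8 * K)) by (apply Rdiv_lt_0_compat; lra). lra. }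
      apply exp_le. fold l8. unfold p.
      assert (INR k <= X * l8) by lra.
      apply Rmult_le_reg_r with X; auto. unfold Rdiv. rewrite Rmult_assoc, Rmult_1_l, Rinv_l; lra. }
    assert (K * (1 / (8 * K)) = 1/8) by (field; lra). nra. }
  set (mM := rho ^ k * Cmod (u a m rho B 0)) in *.
  assert (HmM : 0 < mM) by (unfold mM; apply Rmult_lt_0_compat; auto; apply pow_lt; auto).
  set (M := Cscale (rho ^ k) (u a m rho B 0)) in *.
  assert (HMm : Cmod M = mM).
  { unfold M, mM. rewrite Cmod_scale, Rabs_pos_eq; auto. apply pow_le; lra. }
  set (s := u a m rho zs) in *.
  assert (Hsk : (1 - eps * (P - 1)) * mM <= Cmod (s k)).
  { replace M with (Cadd (s k) (Csub M (s k))) in HMm by (unfold Csub; ceq).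
    pose proof (Cmod_add (s k) (Csub M (s k))). rewrite Cmod_sub_opp in H. nra. }
  unfold Tk. fold rho.
  change (taylor_term (poly_of_roots a zs) m rho k) with (Cmod (s k)).
  rewrite fold_sum. simpl (0 + _)%nat.
  replace (S n) with (k + S (n - k))%nat by lia.
  rewrite sumR_split, sumR_shift, Nat.add_0_r, Nat.eqb_refl.
  rewrite (sumR_ext _ (fun i => Cmod (s i)) k).
  2:{ intros i Hi. destruct (Nat.eqb_spec i k); [lia|]. reflexivity. }
  rewrite (sumR_ext _ (fun i => Cmod (s (S (k + i)))) (n - k)).
  2:{ intros i Hi. destruct (Nat.eqb_spec (k + S i) k); [lia|]. rewrite Nat.add_succ_r. reflexivity. }
  specialize (Ht (n - k)%nat).
  pose proof (final_num K (P - 1) eps HK ltac:(lra) Heps0 HP HKe) as Hfin.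
  set (L := sumR (fun i => Cmod (s i)) k) in *.
  set (T := sumR (fun i => Cmod (s (S (k + i)))) (n - k)) in *.
  assert (Hsum : L + (0 + T) <= ((P - 1) * (1 + eps * (1 + (P - 1))) + eps * (1 + (P - 1))) * mM).
  { replace (1 + (P - 1)) with P by ring. nra. }
  apply Rlt_gt.
  apply Rle_lt_trans with (K * (((P - 1) * (1 + eps * (1 + (P - 1))) + eps * (1 + (P - 1))) * mM)).
  { apply Rmult_le_compat_l; lra. }
  rewrite <- Rmult_assoc. nra.
Qed.
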